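(* Let $R$ be a semi-graded ring, let $f:N\to M$ be a homogeneous homomorphism of semi-graded $R$-modules, and let $X\subseteq N$. Then $f(\langle X\rangle^{\mathsf{SG}})=\langle f(X)\rangle^{\mathsf{SG}}$.
   Context: Rings are associative with $1$; modules are left modules. A ring $R$ is semi-graded (SG) if there are additive subgroups $R_n$ ($n\in\mathbb{Z}$) with $R=\bigoplus_n R_n$, $R_mR_n\subseteq\bigoplus_{k\le m+n}R_k$, and $1\in R_0$. An $R$-module $M$ is SG if $M=\bigoplus_nM_n$ (additive subgroups) with $R_mM_n\subseteq\bigoplus_{k\le m+n}M_k$ for $m\ge0$, $n\in\mathbb{Z}$. A homomorphism $f:N\to M$ of SG modules is homogeneous if $f(N_n)\subseteq M_n$ for all $n$. A submodule $N'$ of an SG module $N$ is an SG submodule if $N'=\bigoplus_n(N'\cap N_n)$. For a subset $X$ of an SG module, $\langle X\rangle^{\mathsf{SG}}$ is the intersection of all SG submodules containing $X$. *)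

(* Defs.v *)
From HB Require Import structures.
From mathcomp Require Import all_boot all_order all_algebra.
Set Implicit Arguments. Unset Strict Implicit. Unset Printing Implicit Defensive.
Import Order.TTheory GRing.Theory Num.Theory.
Local Open Scope ring_scope.

Definition pset (T : Type) := T -> Prop.

Definition is_addsubgroup (V : zmodType) (S : pset V) : Prop :=
  S 0 /\ (forall x y, S x -> S y -> S (x - y)).

Definition is_direct_sum (V : zmodType) (S : pset V) (F : int -> pset V) : Prop :=
  (forall n, is_addsubgroup (F n)) /\
  (forall x, S x <-> exists (s : seq int) (y : int -> V),
      (forall k, k \in s -> F k (y k)) /\ x = \sum_(k <- s) y k) /\
  (forall (s : seq int) (y : int -> V), uniq s ->
      (forall k, k \in s -> F k (y k)) -> \sum_(k <- s) y k = 0 ->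
      forall k, k \in s -> y k = 0).

Definition in_sum_le (V : zmodType) (F : int -> pset V) (m : int) (x : V) : Prop :=
  exists (s : seq int) (y : int -> V),
    (forall k, k \in s -> (k <= m) /\ F k (y k)) /\ x = \sum_(k <- s) y k.

Definition is_SG_ring (R : pzRingType) (RG : int -> pset R) : Prop :=
  is_direct_sum (fun _ => True) RG /\
  (forall m n a b, RG m a -> RG n b -> in_sum_le RG (m + n) (a * b)) /\
  RG 0 1.

Definition is_SG_module (R : pzRingType) (RG : int -> pset R) (M : lmodType R)
  (MG : int -> pset M) : Prop :=
  is_direct_sum (fun _ => True) MG /\
  (forall (m n : int) a x, 0 <= m -> RG m a -> MG n x -> in_sum_le MG (m + n) (a *: x)).

Definition homogeneous (R : pzRingType) (N M : lmodType R)
  (NG : int -> pset N) (MG : int -> pset M) (f : N -> M) : Prop :=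
  forall n x, NG n x -> MG n (f x).

Definition is_submodule (R : pzRingType) (M : lmodType R) (S : pset M) : Prop :=
  S 0 /\ (forall x y, S x -> S y -> S (x - y)) /\ (forall a x, S x -> S (a *: x)).

Definition is_SG_submodule (R : pzRingType) (M : lmodType R) (MG : int -> pset M)
  (S : pset M) : Prop :=
  is_submodule S /\ is_direct_sum S (fun n x => S x /\ MG n x).

Definition SG_span (R : pzRingType) (M : lmodType R) (MG : int -> pset M)
  (X : pset M) : pset M :=
  fun x => forall S, is_SG_submodule MG S -> (forall y, X y -> S y) -> S x.

Definition pimage (A B : Type) (f : A -> B) (X : pset A) : pset B :=
  fun y => exists2 x, X x & y = f x.

(* Main.v *)
Require Import Defs.
From HB Require Import structures.
From mathcomp Require Import all_boot all_order all_algebra.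
From Stdlib Require Import FunctionalExtensionality PropExtensionality.
Set Implicit Arguments. Unset Strict Implicit. Unset Printing Implicit Defensive.
Import GRing.Theory.
Local Open Scope ring_scope.

Section Gen.
Variable V : zmodType.

Lemma sg_add (P : pset V) : is_addsubgroup P -> forall x y, P x -> P y -> P (x + y).
Proof.
move=> [P0 PB] x y Px Py.
have := PB x (0 - y) Px (PB _ _ P0 Py).
by rewrite sub0r opprK.
Qed.

Lemma sg_sum (P : pset V) (I : eqType) (r : seq I) (Pr : pred I) (F : I -> V) :
  is_addsubgroup P -> (forall i, i \in r -> Pr i -> P (F i)) ->
  P (\sum_(i <- r | Pr i) F i).
Proof.
move=> HP HF; rewrite big_seq_cond.
apply: (@big_ind V P); first by case: HP.
  exact: sg_add.
by move=> i /andP[]; apply: HF.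
Qed.

Definition ecomp (s : seq int) (y : int -> V) (k : int) :=
  \sum_(j <- s | j == k) y j.

Lemma ecomp_in (G : int -> pset V) s y k :
  (forall n, is_addsubgroup (G n)) ->
  (forall j, j \in s -> G j (y j)) -> G k (ecomp s y k).
Proof.
move=> HG Hy; apply: sg_sum => // i Hi /eqP <-; exact: Hy.
Qed.

Lemma ecomp_notin s y k : k \notin s -> ecomp s y k = 0.
Proof.
move=> Hk; apply: big1_seq => i /andP[/eqP -> Hi].
by rewrite Hi in Hk.
Qed.

Lemma sum_ecomp (u s : seq int) (y : int -> V) :
  uniq u -> {subset s <= u} -> \sum_(k <- u) ecomp s y k = \sum_(j <- s) y j.
Proof.
move=> Hu; elim: s => [|j s IH] Hs.
  by rewrite big_nil big1 // => k _; rewrite /ecomp big_nil.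
have Hj : j \in u by apply: Hs; rewrite mem_head.
rewrite big_cons -IH; last by move=> x Hx; apply: Hs; rewrite inE Hx orbT.
rewrite /ecomp.
rewrite (eq_bigr (fun k => (if j == k then y j else 0) + \sum_(i <- s | i == k) y i)); last first.
  by move=> k _; rewrite big_cons; case: (j == k); rewrite ?add0r.
rewrite big_split /=; congr (_ + _).
rewrite (big_rem j Hj) /= eqxx big1_seq ?addr0 // => i /andP[_ Hi].
case: eqP => // Eji; subst i.
by rewrite mem_rem_uniqF in Hi.
Qed.

Lemma comp_eq (G : int -> pset V) s t y z :
  (forall n, is_addsubgroup (G n)) ->
  (forall (s : seq int) (y : int -> V), uniq s ->
      (forall k, k \in s -> G k (y k)) -> \sum_(k <- s) y k = 0 ->
      forall k, k \in s -> y k = 0) ->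
  (forall j, j \in s -> G j (y j)) -> (forall j, j \in t -> G j (z j)) ->
  \sum_(j <- s) y j = \sum_(j <- t) z j ->
  forall k, ecomp s y k = ecomp t z k.
Proof.
move=> HG Huniq Hy Hz Hsum k.
set u := undup (s ++ t).
have Uu : uniq u by apply: undup_uniq.
have Hw := Huniq u (fun k => ecomp s y k - ecomp t z k) Uu.
have Hzero : \sum_(k <- u) (ecomp s y k - ecomp t z k) = 0.
  rewrite sumrB !sum_ecomp // ?Hsum ?subrr // => x Hx;
  by rewrite mem_undup mem_cat Hx ?orbT.
case Hk: (k \in u).
  apply/eqP; rewrite -subr_eq0; apply/eqP; apply: Hw => // j _.
  case: (HG j) => _ HB; apply: HB; exact: ecomp_in.
move: Hk; rewrite mem_undup mem_cat => /negbT; rewrite negb_or => /andP[H1 H2].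
by rewrite !ecomp_notin.
Qed.

Lemma ecomp_sum s y : \sum_(k <- undup s) ecomp s y k = \sum_(j <- s) y j.
Proof. by apply: sum_ecomp; [apply: undup_uniq | move=> x; rewrite mem_undup]. Qed.

End Gen.

Definition uniqG (V : zmodType) (G : int -> pset V) :=
  forall (s : seq int) (y : int -> V), uniq s ->
      (forall k, k \in s -> G k (y k)) -> \sum_(k <- s) y k = 0 ->
      forall k, k \in s -> y k = 0.

Lemma sub_addsg (R : pzRingType) (M : lmodType R) (S : pset M) :
  is_submodule S -> is_addsubgroup S.
Proof. by case=> [S0 [SB _]]. Qed.

Lemma sg_comp (R : pzRingType) (M : lmodType R) (MG : int -> pset M) S x s y :
  (forall n, is_addsubgroup (MG n)) -> uniqG MG -> is_SG_submodule MG S -> S x ->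
  (forall j, j \in s -> MG j (y j)) -> x = \sum_(j <- s) y j ->
  forall k, S (ecomp s y k).
Proof.
move=> HG HU [Hsub [_ [Hdec _]]] Sx Hy Ex k.
have [t [z [Hz Ez]]] := (Hdec x).1 Sx.
rewrite (@comp_eq _ MG s t y z HG HU Hy) //; last by rewrite -Ex -Ez.
  by apply: sg_sum; [exact: sub_addsg | move=> i Hi _; case: (Hz i Hi)].
by move=> j Hj; case: (Hz j Hj).
Qed.

Lemma span_sub (R : pzRingType) (M : lmodType R) (MG : int -> pset M) X :
  is_submodule (SG_span MG X).
Proof.
split; first by move=> S [[S0 _] _] _.
split.
  move=> x y Hx Hy S HS HX; case: (HS) => [[_ [SB _]] _]; apply: SB; [exact: Hx|exact: Hy].
move=> a x Hx S HS HX; case: (HS) => [[_ [_ SZ]] _]; apply: SZ; exact: Hx.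
Qed.

Theorem mainTheorem2 (R : pzRingType) (RG : int -> pset R)
  (N M : lmodType R) (NG : int -> pset N) (MG : int -> pset M)
  (f : {linear N -> M}) (X : pset N) :
  is_SG_ring RG -> is_SG_module RG NG -> is_SG_module RG MG ->
  homogeneous NG MG f ->
  pimage f (SG_span NG X) = SG_span MG (pimage f X).
Proof.
move=> _ [[NGsub [NGdec NGuniq]] _] [[MGsub [MGdec MGuniq]] _] Hhom.
apply: functional_extensionality => m; apply: propositional_extensionality; split.
- case=> x Hx -> S HS HX.
  case: (HS) => [[S0 [SB SZ]] _].
  have HSa : is_addsubgroup S by [].
  apply: (Hx (fun n => S (f n))); last by move=> y Hy; apply: HX; exists y.
  split.
    split; first by rewrite raddf0.
    split; first by move=> u v Hu Hv; rewrite raddfB; apply: SB.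
    by move=> a u Hu; rewrite linearZ; apply: SZ.
  split.
    move=> n; split; first by split; [rewrite raddf0 | case: (NGsub n)].
    move=> u v [Hu1 Hu2] [Hv1 Hv2]; split; first by rewrite raddfB; apply: SB.
    by case: (NGsub n) => _; apply.
  split.
    move=> u; split.
      move=> Su.
      have [s [y [Hy Eu]]] := (NGdec u).1 I.
      exists (undup s), (ecomp s y); split; last by rewrite ecomp_sum.
      move=> k _; split; last by apply: ecomp_in => // j /Hy.
      rewrite /ecomp linear_sum.
      apply: (@sg_comp _ _ MG S (f u) s (fun j => f (y j))) => //.
        by move=> j /Hy; apply: Hhom.
      by rewrite Eu linear_sum.
    case=> s [y [Hy ->]]; rewrite linear_sum; apply: sg_sum => // i Hi _.
    by case: (Hy i Hi).
  move=> s y Hs Hy; apply: NGuniq => // k /Hy []; done.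
- move=> Hm; apply: Hm.
  + have Hsub : is_submodule (pimage f (SG_span NG X)).
      have [Sp0 [SpB SpZ]] := span_sub NG X.
      split; first by exists 0 => //; rewrite raddf0.
      split.
        by move=> _ _ [u Hu ->] [v Hv ->]; exists (u - v); [apply: SpB | rewrite raddfB].
      by move=> a _ [u Hu ->]; exists (a *: u); [apply: SpZ | rewrite linearZ].
    split=> //.
    split.
      move=> n; case: (Hsub) => [Q0 [QB _]]; split; first by split => //; case: (MGsub n).
      move=> u v [Hu1 Hu2] [Hv1 Hv2]; split; first by apply: QB.
      by case: (MGsub n) => _; apply.
    split.
      move=> u; split.
        case=> x Hx ->.
        have [s [y [Hy Ex]]] := (NGdec x).1 I.
        exists (undup s), (fun k => f (ecomp s y k)); split.
          move=> k _; split; last by apply: Hhom; apply: ecomp_in => // j /Hy.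
          exists (ecomp s y k) => //.
          move=> S HS HXS.
          apply: (@sg_comp _ _ NG S x s y) => //.
          exact: Hx.
        by rewrite {1}Ex -ecomp_sum linear_sum.
      case=> s [y [Hy ->]]; apply: sg_sum; first exact: sub_addsg.
      by move=> i Hi _; case: (Hy i Hi).
    move=> s y Hs Hy; apply: MGuniq => // k /Hy []; done.
  + by move=> y [x Hx ->]; exists x => // S HS; apply.
Qed.
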